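(* Let $a\geq 1$ and $b\geq 2$ be integers. For Lebesgue-almost every $x\in D$ we have $\lim_{k\to\infty}T_{a,b}^k(x)=(0,\ldots,0,x_{a+2}^{\infty},\ldots,x_{a+b}^{\infty})$ (first $a+1$ coordinates equal to $0$), where $x_j^{\infty}>0$ for $j=a+2,\ldots,a+b$.
   Context: For $n\geq 1$ let $\Lambda^n=\{x\in\mathbb{R}^n : 0\leq x_1\leq\cdots\leq x_n\}$. For integers $a,b\geq 1$ the map $T_{a,b}:\Lambda^{a+b}\to\Lambda^{a+b}$ sends $x$ to the vector obtained by arranging $x_1,\ldots,x_a,\,x_{a+1}-x_a,\ldots,x_{a+b}-x_a$ in nondecreasing order. For $b\geq 2$, $D=\{x\in\Lambda^{a+b}: x_1+x_2+\cdots+x_{a+1}\leq x_{a+2}\}$. *)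

(* Defs.v *)
From HB Require Import structures.
From mathcomp Require Import all_boot all_order all_algebra.
From mathcomp Require Import all_classical all_reals all_analysis.
Import numFieldNormedType.Exports.
Set Implicit Arguments. Unset Strict Implicit. Unset Printing Implicit Defensive.
Import Order.TTheory GRing.Theory Num.Theory.
Local Open Scope classical_set_scope.
Local Open Scope ring_scope.

(* Coordinates x_1..x_n of the paper are x (ord (j-1)) here (0-based). *)

(* 0-based coordinate access by a natural number: crd x k = x_{k+1}
   (and 0 when k >= n, which never happens in our uses). *)
Definition crd (R : realType) (n : nat) (x : 'rV[R]_n) (k : nat) : R :=
  nth 0 [seq x ord0 i | i <- enum 'I_n] k.

Definition Lambda (R : realType) (n : nat) : set 'rV[R]_n :=
  [set x | (forall i : 'I_n, 0 <= x ord0 i) /\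
           (forall i j : 'I_n, (i <= j)%N -> x ord0 i <= x ord0 j)].

(* T_{a,b}: arrange x_1,..,x_a, x_{a+1}-x_a, .., x_{a+b}-x_a in
   nondecreasing order.  (a >= 1 is assumed where used; a.-1 is index a.) *)
Definition Tab (R : realType) (a b : nat) (x : 'rV[R]_(a + b)) : 'rV[R]_(a + b) :=
  let s := [seq (if (i < a)%N then x ord0 i else x ord0 i - crd x a.-1)
           | i : 'I_(a + b) <- enum 'I_(a + b)] in
  let t := sort (fun u v : R => u <= v) s in
  \row_(i < a + b) nth 0 t i.

Definition Dset (R : realType) (a b : nat) : set 'rV[R]_(a + b) :=
  [set x | Lambda x /\
     \sum_(i < a + b | (i <= a)%N) x ord0 i <= crd x a.+1].

Definition lebesgue_null (R : realType) (n : nat) (A : set 'rV[R]_n) : Prop :=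
  forall eps : R, 0 < eps ->
    exists lo hi : nat -> 'rV[R]_n,
      (forall k (i : 'I_n), lo k ord0 i <= hi k ord0 i) /\
      (A `<=` \bigcup_k [set x | forall i : 'I_n,
                           lo k ord0 i <= x ord0 i <= hi k ord0 i]) /\
      (forall N, \sum_(k < N) \prod_(i < n) (hi k ord0 i - lo k ord0 i) <= eps).

(* Main.v *)
Require Import Defs.
From HB Require Import structures.
From mathcomp Require Import all_boot all_order all_algebra.
From mathcomp Require Import all_classical all_reals all_analysis.
From mathcomp Require Import ring lra zify.
From Stdlib Require Import Lia.
Import numFieldNormedType.Exports.
Import Order.TTheory GRing.Theory Num.Theory.
Local Open Scope classical_set_scope.
Local Open Scope ring_scope.
Definition Lx {R : realType} {n} (x : 'rV[R]_n) : seq R := [seq x ord0 i | i <- enum 'I_n].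

Definition stp {R : realType} (a : nat) (s : seq R) : seq R :=
  sort (fun u v : R => u <= v)
   [seq (if (i < a)%N then nth 0 s i else nth 0 s i - nth 0 s a.-1) | i <- iota 0 (size s)].

Lemma size_Lx {R : realType} {n} (x : 'rV[R]_n) : size (Lx x) = n.
Proof. by rewrite size_map size_enum_ord. Qed.

Lemma nth_Lx {R : realType} {n} (x : 'rV[R]_n) (i : 'I_n) : nth 0 (Lx x) i = x ord0 i.
Proof. by rewrite (nth_map i) ?size_enum_ord // nth_ord_enum. Qed.

Lemma Lx_Tab (R : realType) a b (x : 'rV[R]_(a + b)) : Lx (@Tab R a b x) = stp a (Lx x).
Proof.
rewrite /Tab /stp /Lx.
set t := sort _ _.
have -> : [seq (\row_i nth 0 t i) ord0 i | i <- enum 'I_(a + b)] = [seq nth 0 t i | i <- iota 0 (a + b)].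
  by rewrite -val_enum_ord -map_comp; apply: eq_map => i /=; rewrite mxE.
have -> : t = sort (fun u v : R => u <= v) [seq (if (i < a)%N then nth 0 (Lx x) i else nth 0 (Lx x) i - nth 0 (Lx x) a.-1) | i <- iota 0 (size (Lx x))].
  rewrite /t size_Lx -val_enum_ord -map_comp; congr sort; apply: eq_map => i /=.
  by rewrite nth_Lx.
set u := sort _ _.
have hs : size u = (a + b)%N by rewrite /u size_sort size_map size_iota size_Lx.
by rewrite -[in RHS](mkseq_nth 0 u) hs.
Qed.

Definition Inv {R : realType} (a : nat) (P Q : seq R) :=
  [/\ size P = a.+1, sorted <=%O P, all (fun y => 0 <= y) P, sorted <=%O Q &
      ((0 < size Q)%N /\ \sum_(y <- P) y <= nth 0 Q 0)].

Definition sst {R : realType} a (P : seq R) : seq R :=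
  sort (fun u v : R => u <= v) (rcons (take a P) (nth 0 P a - nth 0 P a.-1)).

Lemma sort_cat_le {R : realType} (A B : seq R) : sorted <=%O B ->
  (forall x y, x \in A -> y \in B -> x <= y) ->
  sort (fun u v : R => u <= v) (A ++ B) = sort (fun u v : R => u <= v) A ++ B.
Proof.
move=> sB hAB.
apply: le_sorted_eq.
- exact: (sort_le_sorted (A ++ B)).
- rewrite sorted_pairwise; last exact: le_trans.
  rewrite pairwise_cat; apply/and3P; split.
  + apply/allrelP => x y; rewrite mem_sort; exact: hAB.
  + rewrite -sorted_pairwise; last exact: le_trans.
    exact: (sort_le_sorted A).
  + by rewrite -sorted_pairwise //; exact: le_trans.
- rewrite perm_sort perm_sym; apply: perm_cat => //.
  by rewrite perm_sort.
Qed.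

Lemma decompP {R : realType} (a : nat) (P : seq R) : (1 <= a)%N -> size P = a.+1 ->
  take a P = rcons (take a.-1 P) (nth 0 P a.-1) /\
  P = rcons (take a P) (nth 0 P a).
Proof.
move=> ha hP; split.
  by rewrite -take_nth ?hP ?prednK //; case: a ha hP => //= n _ ->; rewrite ltnS leqnSn.
by rewrite -take_nth ?hP // -hP take_size.
Qed.

Lemma sorted_head_le {R : realType} {Q : seq R} {y : R} : sorted <=%O Q -> y \in Q -> nth 0 Q 0 <= y.
Proof.
case: Q => [//|q Q] /=; rewrite in_cons => sQ /orP [/eqP -> //|yQ].
have : pairwise <=%O (q :: Q) by rewrite -sorted_pairwise //; exact: le_trans.
by rewrite /= => /andP [/allP /(_ y yQ) ->].
Qed.

Lemma sorted_le_last {R : realType} {p : seq R} {d x : R} : sorted <=%O (rcons p d) -> x \in p -> x <= d.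
Proof.
rewrite sorted_pairwise; last exact: le_trans.
by rewrite pairwise_rcons => /andP [/allP H _] /H.
Qed.

Lemma sorted_rcons_inv {R : realType} {p : seq R} {d : R} : sorted <=%O (rcons p d) -> sorted <=%O p.
Proof.
rewrite !sorted_pairwise; try exact: le_trans.
by rewrite pairwise_rcons => /andP [].
Qed.

Lemma sum_ge0_seq {R : realType} {p : seq R} : all (fun y => 0 <= y) p -> 0 <= \sum_(y <- p) y.
Proof. by move=> /allP H; rewrite big_seq; apply: sumr_ge0 => i /H. Qed.

Lemma step_cat {R : realType} {a : nat} (ha : (1 <= a)%N) {P Q : seq R} : Inv a P Q ->
  stp a (P ++ Q) = sst a P ++ map (fun y => y - nth 0 P a.-1) Q.
Proof.
case=> sP sortP nnP sQ [qpos hsum].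
set d := nth 0 P a.-1; set v := nth 0 P a.
have [tP eP] := decompP _ _ ha sP.
have sta : size (take a P) = a by rewrite size_take sP ltnSn.
have hmap : [seq (if (i < a)%N then nth 0 (P ++ Q) i else nth 0 (P ++ Q) i - nth 0 (P ++ Q) a.-1) | i <- iota 0 (size (P ++ Q))] = rcons (take a P) (v - d) ++ map (fun y => y - d) Q.
  apply: (eq_from_nth (x0:=0)).
    by rewrite size_map size_iota !size_cat size_rcons sta size_map sP.
  move=> i; rewrite size_map size_iota => hi.
  rewrite (nth_map 0%N) ?size_iota // nth_iota // add0n.
  have hd : nth 0 (P ++ Q) a.-1 = d.
    by rewrite nth_cat sP (leq_ltn_trans (leq_pred a) (ltnSn a)).
  rewrite hd [in RHS]nth_cat size_rcons sta nth_rcons sta !nth_cat sP.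
  case: (ltngtP i a) => hia.
  - by rewrite (ltn_trans hia (ltnSn a)) nth_take.
  - rewrite ltnNge hia /= (nth_map 0) //.
    move: hi; rewrite size_cat sP => hi.
    by rewrite ltn_subLR // addnC.
  - by rewrite hia ltnSn.
rewrite /stp hmap /sst sort_cat_le //.
- rewrite sorted_map; apply: sub_sorted sQ => x y /=; by rewrite lerD2r.
- move=> x y hx /mapP [q hq ->].
  have sP2 : sorted <=%O (rcons (rcons (take a.-1 P) d) v) by rewrite -tP -eP.
  have hdv : d <= v.
    by apply: (sorted_le_last sP2); rewrite mem_rcons mem_head.
  have nnp : all (fun y => 0 <= y) (take a.-1 P).
    apply/allP => z hz; move/allP: nnP; apply; rewrite eP tP mem_rcons in_cons mem_rcons in_cons hz.
    by rewrite !orbT.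
  have hd0 : 0 <= d by move/allP: nnP; apply; rewrite eP tP mem_rcons in_cons mem_rcons in_cons eqxx orbT.
  have hS : \sum_(y <- P) y = \sum_(y <- take a.-1 P) y + d + v.
    by rewrite {1}eP tP !big_rcons.
  have hsp := sum_ge0_seq nnp.
  have hq0 := sorted_head_le sQ hq.
  have key : x <= \sum_(y <- take a.-1 P) y + v.
    move: hx; rewrite tP mem_rcons in_cons mem_rcons in_cons => /orP [/eqP ->|/orP [/eqP ->|hx]].
    + have hvS : v <= \sum_(y <- take a.-1 P) y + v by rewrite lerDr.
      by apply: le_trans hvS; rewrite lerBlDr lerDl.
    + have hvS : v <= \sum_(y <- take a.-1 P) y + v by rewrite lerDr.
      exact: le_trans hdv hvS.
    + have := sorted_le_last (sorted_rcons_inv sP2) hx => hxd.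
      have hvS : v <= \sum_(y <- take a.-1 P) y + v by rewrite lerDr.
      exact: le_trans hxd (le_trans hdv hvS).
  rewrite lerBrDr (le_trans _ hq0) // (le_trans _ hsum) // hS.
  by rewrite -addrA (addrC d) addrA lerD2r.
Qed.

Section Facts.
End Facts.

Lemma Inv_parts {R : realType} {a : nat} (ha : (1 <= a)%N) {P Q : seq R} : Inv a P Q ->
  let p := take a.-1 P in let d := nth 0 P a.-1 in let v := nth 0 P a in
  [/\ take a P = rcons p d, P = rcons (rcons p d) v, d <= v, 0 <= d &
   [/\ all (fun y => 0 <= y) p, \sum_(y <- P) y = \sum_(y <- p) y + d + v,
       (forall x, x \in p -> x <= d) & (forall x, x \in P -> x <= v)]].
Proof.
case=> sP sortP nnP sQ [qpos hsum] p d v.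
have [tP eP] := decompP _ _ ha sP.
have sP2 : sorted <=%O (rcons (rcons p d) v) by rewrite -tP -eP.
have hdv : d <= v by apply: (sorted_le_last sP2); rewrite mem_rcons mem_head.
have eP2 : P = rcons (rcons p d) v by rewrite -tP -eP.
split => //.
- by move/allP: nnP; apply; rewrite eP2 mem_rcons in_cons mem_rcons in_cons eqxx orbT.
split.
- apply/allP => z hz; move/allP: nnP; apply; rewrite eP2 mem_rcons in_cons mem_rcons in_cons hz.
  by rewrite !orbT.
- by rewrite {1}eP2 !big_rcons.
- by move=> x hx; apply: (sorted_le_last (sorted_rcons_inv sP2)).
- move=> x; rewrite {1}eP2 mem_rcons in_cons => /orP [/eqP -> //|hx].
  exact: (sorted_le_last sP2).
Qed.

Lemma sum_sst {R : realType} {a : nat} (ha : (1 <= a)%N) {P Q : seq R} : Inv a P Q ->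
  \sum_(y <- sst a P) y = \sum_(y <- P) y - nth 0 P a.-1.
Proof.
move=> hI; have [tP eP hdv hd0 [nnp hS _ _]] := Inv_parts ha hI.
rewrite /sst (perm_big _ (permEl (perm_sort _ _))) tP !big_rcons hS.
rewrite /=; lra.
Qed.

Definition Fp {R : realType} (a : nat) (PQ : seq R * seq R) :=
  (sst a PQ.1, map (fun y => y - nth 0 PQ.1 a.-1) PQ.2).

Lemma Inv_F {R : realType} {a : nat} (ha : (1 <= a)%N) {P Q : seq R} : Inv a P Q ->
  Inv a (sst a P) (map (fun y => y - nth 0 P a.-1) Q).
Proof.
move=> hI; have hsum := sum_sst ha hI.
have [tP eP hdv hd0 [nnp hS hp hP]] := Inv_parts ha hI.
case: hI => sP sortP nnP sQ [qpos hsQ].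
split.
- by rewrite /sst size_sort size_rcons size_take sP ltnSn.
- exact: (sort_le_sorted _).
- rewrite /sst (perm_all _ (permEl (perm_sort _ _))) tP all_rcons all_rcons nnp hd0 /=.
  by rewrite subr_ge0 hdv.
- by rewrite sorted_map; apply: sub_sorted sQ => x y /=; rewrite lerD2r.
split; first by rewrite size_map.
by rewrite hsum (nth_map 0) // lerD2r.
Qed.

Lemma iter_stp {R : realType} {a : nat} (ha : (1 <= a)%N) {P Q : seq R} : Inv a P Q ->
  forall k, iter k (stp a) (P ++ Q) = (iter k (Fp a) (P, Q)).1 ++ (iter k (Fp a) (P, Q)).2
      /\ Inv a (iter k (Fp a) (P, Q)).1 (iter k (Fp a) (P, Q)).2.
Proof.
move=> hI; elim=> [//|k [IH1 IH2]].
rewrite iterS IH1 (step_cat ha IH2) iterS; split => //.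
exact: (Inv_F ha IH2).
Qed.

Lemma sum_le_const {R : realType} (s : seq R) (v : R) : (forall x, x \in s -> x <= v) ->
  \sum_(y <- s) y <= v *+ size s.
Proof.
elim: s => [|x s IH] hs; first by rewrite big_nil.
rewrite big_cons /= mulrS lerD //; first by apply: hs; rewrite mem_head.
by apply: IH => y hy; apply: hs; rewrite in_cons hy orbT.
Qed.

Lemma M_step {R : realType} {a : nat} (ha : (1 <= a)%N) {P Q : seq R} : Inv a P Q ->
  nth 0 (sst a P) a <= nth 0 P a.
Proof.
move=> hI; have [tP eP hdv hd0 [nnp hS hp hP]] := Inv_parts ha hI.
have hs : size (sst a P) = a.+1 by case: (Inv_F ha hI).
have : nth 0 (sst a P) a \in sst a P by rewrite mem_nth // hs.
move: (nth 0 (sst a P) a) => x.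
rewrite /sst mem_sort mem_rcons in_cons => /orP [/eqP ->|hx].
  by rewrite lerBlDr lerDl.
by apply: hP; rewrite eP -tP mem_rcons in_cons hx orbT.
Qed.

Lemma P_bounds {R : realType} {a : nat} (ha : (1 <= a)%N) {P Q : seq R} : Inv a P Q ->
  forall x, x \in P -> 0 <= x /\ x <= nth 0 P a.
Proof.
move=> hI x hx; have [tP eP hdv hd0 [nnp hS hp hP]] := Inv_parts ha hI.
split; last exact: hP.
by case: hI => _ _ /allP H _ _; apply: H.
Qed.

Lemma S_le_M {R : realType} {a : nat} (ha : (1 <= a)%N) {P Q : seq R} : Inv a P Q ->
  \sum_(y <- P) y <= nth 0 P a *+ a.+1.
Proof.
move=> hI; have hb := P_bounds ha hI.
case: (hI) => sP _ _ _ _; rewrite -sP; apply: sum_le_const => x /hb [].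
by [].
Qed.

Lemma freeze {R : realType} {a : nat} (ha : (1 <= a)%N) {P Q : seq R} : Inv a P Q ->
  nth 0 P a.-1 < nth 0 P a - nth 0 P a.-1 ->
  nth 0 (sst a P) a.-1 = nth 0 P a.-1.
Proof.
move=> hI hlt; have [tP eP hdv hd0 [nnp hS hp hP]] := Inv_parts ha hI.
have sP : size P = a.+1 by case: hI.
have sP2 : sorted <=%O (rcons (take a.-1 P) (nth 0 P a.-1)).
  by case: (hI) => _ sortP _ _ _; move: sortP; rewrite {1}eP; exact: sorted_rcons_inv.
rewrite /sst tP sort_le_id.
  have hsz : size (take a.-1 P) = a.-1 by rewrite size_take sP (leq_ltn_trans (leq_pred a) (ltnSn a)).
  by rewrite nth_rcons size_rcons hsz prednK // leqnn nth_rcons hsz ltnn eqxx.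
rewrite sorted_pairwise; last exact: le_trans.
rewrite pairwise_rcons -sorted_pairwise ?sP2 ?andbT; last exact: le_trans.
apply/allP => x; rewrite mem_rcons in_cons => /orP [/eqP -> | hx]; first exact: ltW.
exact: ltW (le_lt_trans (hp x hx) hlt).
Qed.

Definition indep {R : realType} (s : seq R) :=
  uniq s /\ forall c : R -> int, \sum_(y <- s) (c y)%:~R * y = 0 -> forall y, y \in s -> c y = 0.

Lemma sum_ind0 {R : realType} (s : seq R) (y : R) : y \notin s ->
  \sum_(z <- s) ((z == y)%:Z)%:~R * z = 0.
Proof.
move=> hy; rewrite big_seq; apply: big1 => z hz.
have -> : (z == y) = false by apply/eqP => E; move: hy; rewrite -E hz.
by rewrite mul0r.
Qed.

Lemma sum_ind {R : realType} (s : seq R) (y : R) : uniq s -> y \in s ->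
  \sum_(z <- s) ((z == y)%:Z)%:~R * z = y.
Proof.
elim: s => [//|x s IH] /= /andP [hx us]; rewrite in_cons big_cons.
have [<- _|nxy /= hy] := eqVneq x y.
  by rewrite sum_ind0 // addr0 mul1r.
by rewrite IH // mul0r add0r.
Qed.

Lemma indep_perm {R : realType} {s t : seq R} : perm_eq s t -> indep s -> indep t.
Proof.
move=> pst [us H]; split; first by rewrite -(perm_uniq pst).
move=> c hc y; rewrite -(perm_mem pst); apply: H.
by rewrite (perm_big _ pst).
Qed.

Lemma indep_nz {R : realType} {s : seq R} : indep s -> 0 \notin s.
Proof.
case=> _ H; apply/negP => h0.
have : (fun z : R => (z == 0)%:Z) 0 = 0.
  apply: (H (fun z : R => (z == 0)%:Z)) => //; rewrite big1 // => z _.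
  by have [->|nz] := eqVneq z 0; rewrite ?mulr0 ?mul0r.
by rewrite /= eqxx.
Qed.

Lemma indep_step {R : realType} (p : seq R) (d v : R) :
  indep (rcons (rcons p d) v) -> indep (rcons (rcons p d) (v - d)).
Proof.
move=> hI; have h0 := indep_nz hI; case: hI => us H.
set q := rcons p d; set w := v - d.
move: (us); rewrite rcons_uniq => /andP [vq uq].
have dq : d \in q by rewrite mem_rcons mem_head.
have vs : v \in rcons q v by rewrite mem_rcons mem_head.
have qs : forall z, z \in q -> z \in rcons q v by move=> z hz; rewrite mem_rcons in_cons hz orbT.
have znv : forall z, z \in q -> (z == v) = false.
  by move=> z hz; apply/negbTE; apply: contraNneq vq => <-.
have wq : w \notin q.
  apply/negP => wq.
  have hv : (v == w) = false by apply/negbTE; apply: contraNneq vq => ->.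
  pose c := fun z : R => (z == v)%:Z - (z == d)%:Z - (z == w)%:Z.
  have : c v = 0.
    apply: H => //.
    under eq_bigr do rewrite /c !intrB !mulrBl.
    rewrite !sumrB !sum_ind //; try exact: qs.
    by rewrite /w; ring.
  by rewrite /c eqxx (eq_sym v d) (znv d dq) hv.
split; first by rewrite rcons_uniq wq uq.
move=> c hc y hy.
pose c' := fun z : R => if z == v then c w else c z - (z == d)%:Z * c w.
have hc' : \sum_(z <- rcons q v) (c' z)%:~R * z = 0.
  rewrite big_rcons /= {2}/c' eqxx.
  have -> : \sum_(z <- q) (c' z)%:~R * z =
      \sum_(z <- q) ((c z)%:~R * z - (c w)%:~R * (((z == d)%:Z)%:~R * z)).
    apply: eq_big_seq => z zq; rewrite /c' znv // intrB intrM; ring.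
  rewrite sumrB -mulr_sumr sum_ind //.
  move: hc; rewrite big_rcons /= => hc.
  rewrite -[RHS]hc /w; ring.
have cw0 : c w = 0 by have := H c' hc' v vs; rewrite /c' eqxx.
move: hy; rewrite mem_rcons in_cons => /orP [/eqP -> // | yq].
by have := H c' hc' y (qs y yq); rewrite /c' znv // cw0 mulr0 subr0.
Qed.

Lemma indep_sst {R : realType} {a : nat} (ha : (1 <= a)%N) {P Q : seq R} : Inv a P Q ->
  indep P -> indep (sst a P).
Proof.
move=> hI hP; have [tP eP hdv hd0 [nnp hS hp hPb]] := Inv_parts ha hI.
apply: (indep_perm (s := rcons (take a P) (nth 0 P a - nth 0 P a.-1))).
  by rewrite perm_sym /sst; apply: permEl; apply: perm_sort.
rewrite tP; apply: indep_step; by rewrite -eP.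
Qed.

Lemma nodrift {R : realType} (S d : nat -> R) (K : nat) (δ : R) :
  (forall k, S k.+1 = S k - d k) -> (forall k, 0 <= S k) -> 0 < δ ->
  (forall l, (K <= l)%N -> δ <= d l) -> False.
Proof.
move=> hS h0 hd hl.
have H : forall j, S (K + j)%N <= S K - j%:R * δ.
  elim=> [|j IH]; first by rewrite addn0 mul0r subr0.
  rewrite addnS hS.
  have := hl (K + j)%N (leq_addr _ _) => h.
  rewrite mulrSr mulrDl mul1r opprD addrA lerB //.
have hq : 0 <= S K / δ by apply: divr_ge0 => //; exact: ltW.
have := archi_boundP hq; set j := Num.Def.archi_bound _ => hj.
have := H j; have := h0 (K + j)%N => h1 h2.
have : S K < j%:R * δ by rewrite -ltr_pdivrMr.
lra.
Qed.

Lemma orbit_small {R : realType} {a : nat} (ha : (1 <= a)%N) {P0 Q0 : seq R} :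
  Inv a P0 Q0 -> indep P0 ->
  forall eps, 0 < eps -> exists K, forall k, (K <= k)%N ->
    nth 0 (iter k (Fp a) (P0, Q0)).1 a < eps.
Proof.
move=> hI0 hInd0 eps heps.
pose it := fun k => iter k (Fp a) (P0, Q0).
have hI : forall k, Inv a (it k).1 (it k).2 := fun k => (iter_stp ha hI0 k).2.
have hInd : forall k, indep (it k).1.
  by elim => [//|k IH]; exact: (indep_sst ha (hI k) IH).
pose S := fun k => \sum_(y <- (it k).1) y.
pose d := fun k => nth 0 (it k).1 a.-1.
pose M := fun k => nth 0 (it k).1 a.
have hS : forall k, S k.+1 = S k - d k := fun k => sum_sst ha (hI k).
have hS0 : forall k, 0 <= S k.
  by move=> k; case: (hI k) => _ _ hnn _ _; exact: sum_ge0_seq hnn.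
have hd0 : forall k, 0 <= d k.
  by move=> k; have [_ _ _ h _] := Inv_parts ha (hI k).
have hdnz : forall k, d k != 0.
  move=> k; have := indep_nz (hInd k); apply: contraNneq => <-.
  by apply: mem_nth; case: (hI k) => -> _ _ _ _; rewrite (leq_ltn_trans (leq_pred a) (ltnSn a)).
have hM : forall k, M k.+1 <= M k := fun k => M_step ha (hI k).
have Mmono : forall k j, M (k + j)%N <= M k.
  move=> k; elim=> [|j IH]; first by rewrite addn0.
  by rewrite addnS; exact: le_trans (hM _) IH.
suff [K hK] : exists K, M K < eps.
  by exists K => k hk; rewrite -(subnKC hk); exact: le_lt_trans (Mmono _ _) hK.
case: (pselect (exists K, M K < eps)) => // hno; exfalso.
have hge : forall k, eps <= M k.
  by move=> k; rewrite leNgt; apply/negP => h; apply: hno; exists k.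
have [K hK] : exists K, d K < eps / 2.
  case: (pselect (exists K, d K < eps / 2)) => // hno2; exfalso.
  apply: (nodrift S d 0 (eps / 2) hS hS0) => //; first by rewrite divr_gt0.
  by move=> l _; rewrite leNgt; apply/negP => h; apply: hno2; exists l.
have hconst : forall j, d (K + j)%N = d K.
  elim=> [|j IH]; first by rewrite addn0.
  rewrite addnS.
  have hlt : d (K + j)%N < M (K + j)%N - d (K + j)%N.
    have := hge (K + j)%N; rewrite IH; lra.
  by rewrite -IH; exact: (freeze ha (hI (K + j)%N) hlt).
apply: (nodrift S d K (d K) hS hS0).
  by rewrite lt_neqAle eq_sym hdnz hd0.
by move=> l hl; rewrite -(subnKC hl) hconst.
Qed.

Lemma Lx_iter {R : realType} {a b : nat} (x : 'rV[R]_(a + b)) k :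
  Lx (iter k (@Tab R a b) x) = iter k (stp a) (Lx x).
Proof. by elim: k => [//|k IH]; rewrite !iterS Lx_Tab IH. Qed.

Lemma nth_Lx_nat {R : realType} {n} {x : 'rV[R]_n} {i} (hi : (i < n)%N) :
  nth 0 (Lx x) i = x ord0 (Ordinal hi).
Proof. by rewrite -nth_Lx. Qed.

Lemma Lx_sorted {R : realType} {n} {x : 'rV[R]_n} : Lambda x ->
  sorted <=%O (Lx x) /\ all (fun y => 0 <= y) (Lx x).
Proof.
case=> hnn hmono; split.
  apply/(sortedP 0) => i; rewrite size_Lx => hi.
  have hi0 : (i < n)%N by apply: ltn_trans hi.
  rewrite (nth_Lx_nat hi0) (nth_Lx_nat hi); apply: hmono => /=.
  exact: leqnSn.
apply/allP => z /mapP [i _ ->]; exact: hnn.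
Qed.

Lemma sum_Dset {R : realType} {a b : nat} (x : 'rV[R]_(a + b)) : (a.+1 < a + b)%N ->
  \sum_(i < a + b | (i <= a)%N) x ord0 i = \sum_(y <- take a.+1 (Lx x)) y.
Proof.
move=> hn.
have hs : size (take a.+1 (Lx x)) = a.+1 by rewrite size_take size_Lx hn.
rewrite (big_nth 0) hs big_mkord (big_ord_widen _ (fun i => nth 0 (take a.+1 (Lx x)) i) (ltnW hn)).
apply: eq_big => // i hi.
by rewrite nth_take // nth_Lx.
Qed.

Lemma orbit_Q {R : realType} {a : nat} (ha : (1 <= a)%N) {P0 Q0 : seq R} :
  Inv a P0 Q0 -> forall k, (iter k (Fp a) (P0, Q0)).2 =
    map (fun y => y - (\sum_(z <- P0) z - \sum_(z <- (iter k (Fp a) (P0, Q0)).1) z)) Q0.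
Proof.
move=> hI0; elim=> [|k IH].
  by rewrite /= subrr; under eq_map do rewrite subr0; rewrite map_id.
have hIk := (iter_stp ha hI0 k).2.
rewrite iterS /= IH -map_comp; apply: eq_map => y /=.
rewrite (sum_sst ha hIk); ring.
Qed.

Definition goodlim {R : realType} {a b : nat} (x : 'rV[R]_(a + b)) :=
  exists y : 'rV[R]_(a + b),
            ((fun k : nat => iter k (@Tab R a b) x) @ \oo --> y) /\
            (forall i : 'I_(a + b), (i <= a)%N -> y ord0 i = 0) /\
            (forall i : 'I_(a + b), (a < i)%N -> 0 < y ord0 i).

Lemma conv_main {R : realType} {a b : nat} (ha : (1 <= a)%N) (hb : (2 <= b)%N)
  (x : 'rV[R]_(a + b)) : @Dset R a b x -> indep (take a.+1 (Lx x)) ->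
  \sum_(y <- take a.+1 (Lx x)) y != crd x a.+1 -> goodlim x.
Proof.
move=> [hL hsum] hind hneq.
have hn : (a.+1 < a + b)%N by rewrite -addn1 ltn_add2l.
have [ssort snn] := Lx_sorted hL.
case: (hL) => hnn hmono.
set s := Lx x; set P0 := take a.+1 s; set Q0 := drop a.+1 s.
have hQ0 : nth 0 Q0 0 = crd x a.+1 by rewrite /Q0 nth_drop addn0.
have hI0 : Inv a P0 Q0.
  split.
  - by rewrite /P0 size_take size_Lx hn.
  - exact: take_sorted.
  - by apply/allP => z hz; move/allP: snn; apply; exact: mem_take hz.
  - exact: drop_sorted.
  split; first by rewrite /Q0 size_drop size_Lx subn_gt0.
  by rewrite hQ0 /P0 /s -sum_Dset.
have hstrict : \sum_(z <- P0) z < nth 0 Q0 0.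
  by rewrite lt_neqAle hQ0 hneq /= -hQ0; case: hI0 => _ _ _ _ [].
pose it := fun k => iter k (Fp a) (P0, Q0).
have hX : forall k (i : 'I_(a + b)), iter k (@Tab R a b) x ord0 i = nth 0 ((it k).1 ++ (it k).2) i.
  by move=> k i; rewrite -nth_Lx Lx_iter -/s -(cat_take_drop a.+1 s) (iter_stp ha hI0 k).1.
have hsP : forall k, size (it k).1 = a.+1 by move=> k; case: (iter_stp ha hI0 k) => _ [].
pose S0 := \sum_(z <- P0) z.
exists (\row_(i < a + b) (if (i <= a)%N then 0 else x ord0 i - S0)).
split; last split.
- apply/cvgrPdist_lt => e he.
  have hea : 0 < e / (a.+2)%:R by rewrite divr_gt0.
  have [K hK] := orbit_small ha hI0 hind _ hea.
  apply: filterS (nbhs_infty_ge K) => k hk.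
  have hIk := (iter_stp ha hI0 k).2.
  set M := nth 0 (it k).1 a.
  have hM : M *+ a.+1 < e.
    have := hK k hk; rewrite -/M ltr_pdivlMr ?ltr0n // -mulr_natr => h.
    have hM0 : 0 <= M.
      by have := P_bounds ha hIk M (mem_nth 0 _); rewrite hsP => /(_ (ltnSn a)) [].
    move: h; rewrite mulr_natr mulrS => h.
    have : 0 <= M *+ a.+1 by rewrite mulrn_wge0.
    lra.
  change (mx_norm (\row_(i < a + b) (if (i <= a)%N then 0 else x ord0 i - S0) - iter k (@Tab R a b) x) < e).
  rewrite mx_normrE; apply: bigmax_lt => // -[i0 i] _ /=.
  rewrite !mxE (ord1 i0) hX; apply: le_lt_trans hM.
  case: ifP => hia.
  + have hiP : (i < size (it k).1)%N by rewrite hsP ltnS.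
    rewrite nth_cat hiP sub0r normrN.
    have [h0 h1] := P_bounds ha hIk (nth 0 (it k).1 i) (mem_nth 0 hiP).
    have hM0 := le_trans h0 h1.
    rewrite ger0_norm //; apply: le_trans h1 _.
    by rewrite mulrS lerDl mulrn_wge0.
  + have hia' : (a.+1 <= i)%N by rewrite ltnNge hia.
    have hiQ : (i - a.+1 < size Q0)%N.
      by rewrite /Q0 size_drop size_Lx ltn_sub2r // ltn_ord.
    rewrite nth_cat hsP ltnNge hia' /= orbit_Q // (nth_map 0) //.
    rewrite /Q0 nth_drop subnKC // -/s (nth_Lx x i).
    have E : forall u v w : R, u - v - (u - (v - w)) = - w by move=> u v w; ring.
    rewrite -/S0 E normrN.
    have hSk0 := sum_ge0_seq (let: And5 _ _ hnn' _ _ := hIk in hnn').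
    rewrite ger0_norm; first exact: (S_le_M ha hIk).
    exact: hSk0.
- by move=> i hi; rewrite mxE hi.
- move=> i hi; rewrite mxE leqNgt hi /= subr_gt0.
  apply: lt_le_trans hstrict _.
  rewrite hQ0 /crd -/(Lx x) (nth_Lx_nat hn); apply: hmono => //.
Qed.

Definition cov {R : realType} {n : nat} (A : set 'rV[R]_n) (V : R) :=
  exists lo hi : nat -> 'rV[R]_n,
    (forall k (i : 'I_n), lo k ord0 i <= hi k ord0 i) /\
    (A `<=` \bigcup_k [set x | forall i : 'I_n, lo k ord0 i <= x ord0 i <= hi k ord0 i]) /\
    (forall N, \sum_(k < N) \prod_(i < n) (hi k ord0 i - lo k ord0 i) <= V).

Lemma cov_sub {R : realType} {n : nat} (A B : set 'rV[R]_n) V : A `<=` B -> cov B V -> cov A V.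
Proof.
move=> hAB [lo [hi [h1 [h2 h3]]]]; exists lo, hi; split => //; split => //.
by move=> x /hAB /h2.
Qed.

Lemma cov_le {R : realType} {n : nat} (A : set 'rV[R]_n) V W : V <= W -> cov A V -> cov A W.
Proof.
move=> hVW [lo [hi [h1 [h2 h3]]]]; exists lo, hi; split => //; split => //.
by move=> N; apply: le_trans (h3 N) hVW.
Qed.

Lemma prod_deg0 {R : realType} {n : nat} (i0 : 'I_n) (F : 'I_n -> R) :
  F i0 = 0 -> \prod_(i < n) F i = 0.
Proof. by move=> h; rewrite (bigD1 i0) //= h mul0r. Qed.

Lemma sum_ind_nat {R : realType} (N c : nat) :
  \sum_(k < N) ((k : nat) == c)%:R <= (1 : R).
Proof.
case: (ltnP c N) => hc.
  rewrite (bigD1 (Ordinal hc)) //= eqxx big1 ?addr0 // => k hk.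
  case: eqP => // E; exfalso; move: hk; apply/negP; rewrite negbK.
  by apply/eqP/val_inj.
rewrite big1 ?ler01 // => k _; case: eqP => // E.
by move: (ltn_ord k); rewrite E ltnNge hc.
Qed.

Lemma cov_union {R : realType} {n : nat} (i0 : 'I_n) (A : set 'rV[R]_n)
  (B : nat -> set 'rV[R]_n) (V : nat -> R) (W : R) :
  A `<=` \bigcup_k B k -> (forall k, cov (B k) (V k)) ->
  (forall K, \sum_(k < K) V k <= W) -> cov A W.
Proof.
move=> hA hB hW.
have : forall k, exists p : (nat -> 'rV[R]_n) * (nat -> 'rV[R]_n),
  (forall q (i : 'I_n), p.1 q ord0 i <= p.2 q ord0 i) /\
  (B k `<=` \bigcup_q [set x | forall i : 'I_n, p.1 q ord0 i <= x ord0 i <= p.2 q ord0 i]) /\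
  (forall N, \sum_(q < N) \prod_(i < n) (p.2 q ord0 i - p.1 q ord0 i) <= V k).
  by move=> k; have [lo [hi h]] := hB k; exists (lo, hi).
move=> /boolp.choice [f hf].
pose lo' := fun k => if pickle_inv k is Some pq then (f pq.1).1 pq.2 else 0.
pose hi' := fun k => if pickle_inv k is Some pq then (f pq.1).2 pq.2 else 0.
pose vv := fun p q => \prod_(i < n) ((f p).2 q ord0 i - (f p).1 q ord0 i).
have vv0 : forall p q, 0 <= vv p q.
  move=> p q; apply: prodr_ge0 => i _; rewrite subr_ge0.
  by case: (hf p) => h _; exact: h.
exists lo', hi'; split; last split.
- move=> k i; rewrite /lo' /hi'; case: (pickle_inv k) => [[p q]|] //=.
  by case: (hf p) => h _; exact: h.
- move=> x /hA [p _ hx]; case: (hf p) => _ [hc _].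
  have [q _ hq] := hc x hx.
  exists (pickle (p, q)) => //.
  by rewrite /lo' /hi' pickleK_inv.
move=> N.
pose B0 := (\max_(k < N) (if pickle_inv (k : nat) is Some pq then maxn pq.1 pq.2 else 0%N)).+1.
pose h := fun t : 'I_B0 * 'I_B0 => Some ((t.1 : nat), (t.2 : nat)).
have E1 : forall k : 'I_N, \prod_(i < n) (hi' k ord0 i - lo' k ord0 i) =
    \sum_(t : 'I_B0 * 'I_B0) (pickle_inv (k : nat) == h t)%:R * vv t.1 t.2.
  move=> k; rewrite /lo' /hi'.
  have hmax := @leq_bigmax _ (fun k : 'I_N => if pickle_inv (k : nat) is Some pq then maxn pq.1 pq.2 else 0%N) k.
  case E : (pickle_inv (k : nat)) hmax => [[p q]|] /= hmax.
    have hp : (p < B0)%N by rewrite ltnS; apply: leq_trans hmax; exact: leq_maxl.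
    have hq : (q < B0)%N by rewrite ltnS; apply: leq_trans hmax; exact: leq_maxr.
    rewrite [RHS](bigD1 (Ordinal hp, Ordinal hq)) //= eqxx mul1r [X in _ = _ + X]big1 ?addr0 // => t ht.
    case: eqP => [He|_]; last by rewrite mul0r.
    move: He; rewrite /h => -[e1 e2]; exfalso; move: ht; apply/negP; rewrite negbK.
    by apply/eqP; case: t e1 e2 => [t1 t2] /= e1 e2; congr pair; apply: val_inj.
  rewrite (prod_deg0 i0) ?subrr //.
  by rewrite big1 // => t _; rewrite mul0r.
rewrite (eq_bigr _ (fun k _ => E1 k)) exchange_big /=.
apply: (@le_trans _ _ (\sum_(t : 'I_B0 * 'I_B0) vv t.1 t.2)).
  apply: ler_sum => t _; rewrite -mulr_suml mulrC ler_piMr //.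
  have -> : \sum_(i < N) ((pickle_inv (i : nat) == h t)%:R : R) =
            \sum_(i < N) (((i : nat) == pickle ((t.1 : nat), (t.2 : nat)))%:R : R).
    apply: eq_bigr => i _; congr (_%:R).
    case: (boolP (pickle_inv (i : nat) == h t)) => [/eqP He|Hne].
      suff -> : (i : nat) = pickle ((t.1 : nat), (t.2 : nat)) by rewrite eqxx.
      by have := @pickle_invK (nat * nat)%type (i : nat); rewrite He /=.
    suff -> : ((i : nat) == pickle ((t.1 : nat), (t.2 : nat))) = false by [].
    apply/negbTE; apply: contra Hne => /eqP ->; by rewrite pickleK_inv.
  exact: sum_ind_nat.
rewrite -(pair_bigA _ (fun p q : 'I_B0 => vv p q)) /=.
apply: le_trans (hW B0); apply: ler_sum => p _.
by case: (hf p) => _ [_ h3]; exact: h3.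
Qed.

Lemma cov_single {R : realType} {n : nat} (i0 : 'I_n) (A : set 'rV[R]_n) (lo hi : 'I_n -> R) :
  (forall i, lo i <= hi i) ->
  (A `<=` [set x | forall i, lo i <= x ord0 i <= hi i]) ->
  cov A (\prod_(i < n) (hi i - lo i)).
Proof.
move=> hlh hA.
exists (fun k : nat => if k is 0%N then (\row_(i < n) lo i : 'rV[R]_n) else (0 : 'rV[R]_n)),
  (fun k : nat => if k is 0%N then (\row_(i < n) hi i : 'rV[R]_n) else (0 : 'rV[R]_n)).
split; last split.
- by case=> [|k] i; rewrite ?mxE.
- move=> x /hA hx; exists 0%N => //= i; rewrite !mxE; exact: hx.
- case=> [|N]; first by rewrite big_ord0; apply: prodr_ge0 => i _; rewrite subr_ge0.
  rewrite big_ord_recl /= [X in _ + X]big1 ?addr0.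
    by rewrite le_eqVlt; apply/orP; left; apply/eqP; apply: eq_bigr => i _; rewrite !mxE.
  by move=> k _; apply: (prod_deg0 i0); rewrite subrr.
Qed.

Lemma cov_set0 {R : realType} {n : nat} (i0 : 'I_n) : cov (@set0 'rV[R]_n) 0.
Proof.
have := cov_single i0 (@set0 'rV[R]_n) (fun _ => 0) (fun _ => 0) (fun _ => lexx _) (sub0set _).
by rewrite (prod_deg0 i0) // subrr.
Qed.

Lemma geom_sum {R : realType} (eps : R) K : 0 <= eps ->
  \sum_(k < K) eps / (2 ^+ k.+1) <= eps.
Proof.
move=> he.
suff -> : \sum_(k < K) eps / (2 ^+ k.+1) = eps - eps / (2 ^+ K).
  by rewrite lerBlDr lerDl divr_ge0 // exprn_ge0.
elim: K => [|K IH]; first by rewrite big_ord0 expr0 divr1 subrr.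
rewrite big_ord_recr /= IH exprS.
have h2 : (2 : R) ^+ K != 0 by rewrite expf_neq0.
field; rewrite h2 /=; by [].
Qed.

Lemma strip_find {R : realType} (l w z : R) (m : nat) : (0 < m)%N ->
  l <= z <= l + m%:R * w -> exists2 g, (g < m)%N & l + g%:R * w <= z <= l + g.+1%:R * w.
Proof.
elim: m => [//|m IH] _ /andP [h1 h2].
case: (posnP m) => [m0|mpos].
  by exists 0%N; rewrite // mul0r addr0 h1 /=; move: h2; rewrite m0.
case: (lerP z (l + m%:R * w)) => hz.
  by have [g hg hg'] := IH mpos (introT andP (conj h1 hz)); exists g => //; exact: ltnW.
by exists m => //; rewrite (ltW hz) h2.
Qed.

Definition rvol {R : realType} {n} (j : 'I_n) (l u : 'I_n -> R) :=
  \prod_(i < n | i != j) (u i - l i).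

Definition slabset {R : realType} {n} (c l u : 'I_n -> R) (t δ : R) : set 'rV[R]_n :=
  [set x | (forall i, l i <= x ord0 i <= u i) /\ `|\sum_(i < n) c i * x ord0 i - t| <= δ].

Lemma sum_lt_ind {R : realType} (K M : nat) :
  \sum_(g < K) (((g < M)%N)%:R : R) = (minn K M)%:R.
Proof.
elim: K => [|K IH]; first by rewrite big_ord0 min0n.
rewrite big_ord_recr /= IH -natrD; congr (_%:R).
by lia.
Qed.

Lemma slab_base {R : realType} {n} (j : 'I_n) (c : 'I_n -> R) : c j = 1 ->
  (forall i, i != j -> c i = 0) ->
  forall (l u : 'I_n -> R) (t δ η : R), (forall i, l i <= u i) -> 0 <= δ -> 0 < η ->
  cov (slabset c l u t δ) ((2 * δ + η) * rvol j l u).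
Proof.
move=> hcj hc l u t δ η hlu hδ hη.
have hsum : forall x : 'rV[R]_n, \sum_i c i * x ord0 i = x ord0 j.
  move=> x; rewrite (bigD1 j) //= hcj mul1r big1 ?addr0 // => i hi.
  by rewrite hc // mul0r.
pose lo := fun i => if i == j then t - δ else l i.
pose hi := fun i => if i == j then t + δ else u i.
have hv : \prod_i (hi i - lo i) = 2 * δ * rvol j l u.
  rewrite (bigD1 j) //= /lo /hi eqxx; congr (_ * _); first ring.
  by apply: eq_bigr => i hi'; rewrite (negbTE hi').
have hr0 : 0 <= rvol j l u by apply: prodr_ge0 => i _; rewrite subr_ge0.
apply: (@cov_le R n _ (\prod_(i < n) (hi i - lo i))); last apply: (cov_single j).
- rewrite hv ler_wpM2r //; lra.
- by move=> i; rewrite /lo /hi; case: eqP => _ //; lra.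
- move=> x [hb hs]; rewrite hsum in hs => i; rewrite /lo /hi.
  case: eqP => [->|_]; last exact: hb.
  by move: hs; rewrite ler_norml => /andP [h1 h2]; apply/andP; split; lra.
Qed.

Lemma slab_ind {R : realType} {n} (j : 'I_n) (S : seq 'I_n) : forall (c : 'I_n -> R), c j = 1 ->
  (forall i, i != j -> i \notin S -> c i = 0) ->
  forall (l u : 'I_n -> R) (t δ η : R), (forall i, l i <= u i) -> 0 <= δ -> 0 < η ->
  cov (slabset c l u t δ) ((2 * δ + η) * rvol j l u).
Proof.
elim: S => [|i0 S IH] c hcj hc l u t δ η hlu hδ hη.
  by apply: slab_base => // i hi; apply: hc.
case: (eqVneq i0 j) => [e|ne].
  apply: IH => // i hij hiS; apply: hc => //.
  by rewrite in_cons negb_or hiS andbT e.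
pose c' := fun i => if i == i0 then 0 else c i.
have hc'j : c' j = 1 by rewrite /c' eq_sym (negbTE ne).
have hc' : forall i, i != j -> i \notin S -> c' i = 0.
  move=> i hij hiS; rewrite /c'; case: eqP => // /eqP hi0; apply: hc => //.
  by rewrite in_cons negb_or hi0 hiS.
pose L := u i0 - l i0.
have hL : 0 <= L by rewrite subr_ge0.
pose a0 := `|c i0|.
have ha0 : 0 <= a0 by rewrite /a0 normr_ge0.
have [M hM0 hM] : exists2 M : nat, (0 < M)%N & 4 * a0 * L < M%:R * η.
  have hq : 0 <= 4 * a0 * L / η by rewrite divr_ge0 ?mulr_ge0 // ltW.
  exists (Num.Def.archi_bound (4 * a0 * L / η)).+1 => //.
  rewrite -ltr_pdivrMr //; apply: lt_trans (archi_boundP hq) _.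
  by rewrite ltr_nat.
have hMpos : 0 < (M%:R : R) by rewrite ltr0n.
pose w := L / M%:R.
have hw0 : 0 <= w by rewrite divr_ge0 // ltW.
have hMw : M%:R * w = L by rewrite /w mulrC -mulrA mulVf ?mulr1 // gt_eqF.
have hcw : 2 * a0 * w <= η / 2.
  have h' : M%:R * (4 * a0 * w) < M%:R * η.
    have -> : M%:R * (4 * a0 * w) = 4 * a0 * (M%:R * w) by ring.
    by rewrite hMw.
  rewrite ltr_pM2l // in h'; lra.
pose lg := fun (g : nat) i => if i == i0 then l i0 + g%:R * w else l i.
pose ug := fun (g : nat) i => if i == i0 then l i0 + g.+1%:R * w else u i.
pose B := fun g => if (g < M)%N then
   slabset c' (lg g) (ug g) (t - c i0 * (l i0 + g%:R * w)) (δ + a0 * w) else set0.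
pose Rr := \prod_(i < n | (i != j) && (i != i0)) (u i - l i).
have hRr : 0 <= Rr by apply: prodr_ge0 => i _; rewrite subr_ge0.
have hrv : forall g, rvol j (lg g) (ug g) = w * Rr.
  move=> g; rewrite /rvol (bigD1 i0) //= /lg /ug eqxx; congr (_ * _); first ring.
  by apply: eq_bigr => i /andP [_ hi]; rewrite (negbTE hi).
have hrv0 : rvol j l u = L * Rr by rewrite /rvol (bigD1 i0).
pose C := (2 * (δ + a0 * w) + η / 2) * (w * Rr).
have haw : 0 <= a0 * w by rewrite mulr_ge0.
have hC : 0 <= C by rewrite /C mulr_ge0 ?mulr_ge0 //; lra.
pose V := fun g => if (g < M)%N then C else 0.
apply: (cov_union j _ B V).
- move=> x [hb hs].
  have /andP [hx1 hx2] := hb i0.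
  have hx2' : x ord0 i0 <= l i0 + M%:R * w by rewrite hMw /L addrC subrK.
  have [g hg hg'] := strip_find (l i0) w (x ord0 i0) M hM0 (introT andP (conj hx1 hx2')).
  exists g => //; rewrite /B hg; split.
  + move=> i; rewrite /lg /ug; case: eqP => [->|_] //; exact: hb.
  + have hsum : \sum_i c' i * x ord0 i = \sum_i c i * x ord0 i - c i0 * x ord0 i0.
      rewrite (bigD1 i0) //= [in RHS](bigD1 i0) //= /c' eqxx mul0r add0r.
      rewrite (eq_bigr (fun i => c i * x ord0 i)); first ring.
      by move=> i hi; rewrite (negbTE hi).
    rewrite hsum.
    have -> : \sum_i c i * x ord0 i - c i0 * x ord0 i0 - (t - c i0 * (l i0 + g%:R * w)) =
      (\sum_i c i * x ord0 i - t) - c i0 * (x ord0 i0 - (l i0 + g%:R * w)) by ring.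
    apply: le_trans (ler_normB _ _) _; apply: lerD => //.
    rewrite normrM ler_wpM2l //.
    move: hg'; rewrite -natr1 => /andP [h1 h2].
    by rewrite ger0_norm; lra.
- move=> g; rewrite /B /V; case: ifP => hg; last exact: cov_set0.
  rewrite /C -(hrv g); apply: IH => //.
  + move=> i; rewrite /lg /ug; case: (i == i0) => //.
    by rewrite lerD2l ler_wpM2r // ler_nat.
  + lra.
  + lra.
- move=> K.
  have -> : \sum_(g < K) V g = \sum_(g < K) (((g < M)%N)%:R * C).
    by apply: eq_bigr => g _; rewrite /V; case: ifP; rewrite ?mul1r ?mul0r.
  rewrite -mulr_suml sum_lt_ind.
  apply: (@le_trans _ _ (M%:R * C)).
    by rewrite ler_wpM2r // ler_nat geq_minr.
  rewrite hrv0 /C.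
  have -> : M%:R * ((2 * (δ + a0 * w) + η / 2) * (w * Rr)) =
     (2 * δ + 2 * a0 * w + η / 2) * ((M%:R * w) * Rr) by ring.
  rewrite hMw ler_wpM2r ?mulr_ge0 //; lra.
Qed.

Lemma lnull_cov {R : realType} {n} (A : set 'rV[R]_n) : (forall eps, 0 < eps -> cov A eps) -> lebesgue_null A.
Proof. by []. Qed.

Lemma hyper_null {R : realType} {n} (m : 'I_n -> int) (j : 'I_n) : m j != 0 ->
  lebesgue_null [set x : 'rV[R]_n | \sum_i (m i)%:~R * x ord0 i = 0].
Proof.
move=> hj; apply: lnull_cov => eps heps.
have hmj : ((m j)%:~R : R) != 0 by rewrite intr_eq0.
pose c := fun i => ((m i)%:~R : R) / (m j)%:~R.
pose H := fun N : nat => [set x : 'rV[R]_n | (forall i, - N%:R <= x ord0 i <= N%:R) /\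
     \sum_i (m i)%:~R * x ord0 i = 0].
apply: (cov_union j _ H (fun N => eps / 2 ^+ N.+1)).
- move=> x hx.
  have hq : 0 <= \sum_i `|x ord0 i| by apply: sumr_ge0 => i _.
  exists (Num.Def.archi_bound (\sum_i `|x ord0 i|)) => //; split => // i.
  have hxi : `|x ord0 i| <= \sum_i `|x ord0 i|.
    by rewrite (bigD1 i) //= lerDl sumr_ge0.
  have := archi_boundP hq; move: (Num.Def.archi_bound _) => N hN.
  by rewrite -ler_norml; apply: le_trans hxi (ltW hN).
- move=> N.
  set e' := eps / 2 ^+ N.+1.
  have he' : 0 < e' by rewrite divr_gt0 // exprn_gt0.
  pose l := fun i : 'I_n => - (N%:R : R).
  pose u := fun i : 'I_n => (N%:R : R).
  have hr0 : 0 <= rvol j l u by apply: prodr_ge0 => i _; rewrite subr_ge0 /l /u; apply: le_trans (ler0n _ _); rewrite oppr_le0.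
  pose η := e' / (rvol j l u + 1).
  have hη : 0 < η by rewrite divr_gt0 //; lra.
  apply: (@cov_le R n _ ((2 * 0 + η) * rvol j l u)).
    rewrite mulr0 add0r /η mulrAC ler_pdivrMr; last lra.
    by rewrite ler_wpM2l ?(ltW he') //; lra.
  apply: (@cov_sub R n _ (slabset c l u 0 0)); last first.
    apply: (slab_ind j (enum 'I_n)) => //.
    + by rewrite /c mulfV.
    + by move=> i _; rewrite mem_enum.
    + by move=> i; rewrite /l /u; apply: le_trans (ler0n _ _); rewrite oppr_le0.
  move=> x [hb hs]; split => //.
  have -> : \sum_i c i * x ord0 i = (\sum_i (m i)%:~R * x ord0 i) / (m j)%:~R.
    by rewrite mulr_suml; apply: eq_bigr => i _; rewrite /c; ring.
  by rewrite hs mul0r subr0 normr0.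
- by move=> K; apply: geom_sum; exact: ltW.
Qed.

Definition BadSet {R : realType} {n} : set 'rV[R]_n :=
  [set x | exists m : {ffun 'I_n -> int}, (exists i, m i != 0) /\ \sum_i (m i)%:~R * x ord0 i = 0].

Lemma Bad_null {R : realType} {n} (i0 : 'I_n) : lebesgue_null (@BadSet R n).
Proof.
apply: lnull_cov => eps heps.
pose B := fun k : nat => if @pickle_inv {ffun 'I_n -> int} k is Some m then
  (if [exists i, m i != 0] then [set x : 'rV[R]_n | \sum_i (m i)%:~R * x ord0 i = 0] else set0)
  else set0.
apply: (cov_union i0 _ B (fun k => eps / 2 ^+ k.+1)).
- move=> x [m [[i hi] hx]]; exists (pickle m) => //.
  rewrite /B pickleK_inv.
  by have -> : [exists i, m i != 0] by apply/existsP; exists i.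
- move=> k; rewrite /B.
  have hek : 0 < eps / 2 ^+ k.+1 by rewrite divr_gt0 // exprn_gt0.
  case: (pickle_inv k) => [m|]; last by apply: (cov_le _ _ _ (ltW hek)); exact: cov_set0.
  case: existsP => [[j hj]|_]; last by apply: (cov_le _ _ _ (ltW hek)); exact: cov_set0.
  exact: (hyper_null m j hj).
- by move=> K; apply: geom_sum; exact: ltW.
Qed.

Lemma sum_DsetF {R : realType} {a b : nat} (x : 'rV[R]_(a + b)) (F : R -> R) : (a.+1 < a + b)%N ->
  \sum_(i < a + b | (i <= a)%N) F (x ord0 i) = \sum_(y <- take a.+1 (Lx x)) F y.
Proof.
move=> hn.
have hs : size (take a.+1 (Lx x)) = a.+1 by rewrite size_take size_Lx hn.
rewrite (big_nth 0) hs big_mkord (big_ord_widen _ (fun i => F (nth 0 (take a.+1 (Lx x)) i)) (ltnW hn)).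
apply: eq_big => // i hi.
by rewrite nth_take // nth_Lx.
Qed.

Lemma sum_if_nat {R : realType} {n} (F : 'I_n -> R) (j : nat) (hj : (j < n)%N) :
  \sum_(k < n) (if (k : nat) == j then F k else 0) = F (Ordinal hj).
Proof.
by rewrite -big_mkcond (big_pred1 (Ordinal hj)).
Qed.

Lemma lnull_sub {R : realType} {n} (A B : set 'rV[R]_n) : A `<=` B -> lebesgue_null B -> lebesgue_null A.
Proof. by move=> hAB hB eps he; apply: (cov_sub _ _ _ hAB); exact: hB. Qed.

Lemma exc_sub {R : realType} {a b : nat} (ha : (1 <= a)%N) (hb : (2 <= b)%N) :
  [set x : 'rV[R]_(a + b) | @Dset R a b x /\ ~ goodlim x] `<=` BadSet.
Proof.
move=> x [hD hng].
have hn : (a.+1 < a + b)%N by rewrite -addn1 ltn_add2l.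
have hcrd : crd x a.+1 = x ord0 (Ordinal hn) by rewrite /crd -/(Lx x) (nth_Lx_nat hn).
case: (pselect (\sum_(y <- take a.+1 (Lx x)) y = crd x a.+1)) => [hEq|hNe].
  exists [ffun i : 'I_(a + b) => if (i <= a)%N then 1%Z else if (i : nat) == a.+1 then (-1)%Z else 0%Z].
  split.
    by exists (Ordinal hn); rewrite ffunE /= ltnn eqxx.
  have -> : \sum_(i < a + b) ([ffun i : 'I_(a + b) => if (i <= a)%N then 1%Z else if (i : nat) == a.+1 then (-1)%Z else 0%Z] i)%:~R * x ord0 i
     = \sum_(i < a + b) ((if (i <= a)%N then x ord0 i else 0) - (if (i : nat) == a.+1 then x ord0 i else 0)).
    apply: eq_bigr => i _; rewrite ffunE.
    case: ifP => h1.
      have -> : ((i : nat) == a.+1) = false by rewrite ltn_eqF // ltnS.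
      by rewrite mul1r subr0.
    case: ifP => _; last by rewrite mul0r subr0.
    by rewrite sub0r -mulN1r; congr (_ * _).
  rewrite sumrB -big_mkcond /= (sum_if_nat (fun i => x ord0 i) a.+1 hn).
  by rewrite (sum_DsetF x id hn) hEq hcrd subrr.
have hNi : ~ indep (take a.+1 (Lx x)).
  by move=> hi; apply: hng; apply: conv_main => //; apply/eqP.
have hsz : size (take a.+1 (Lx x)) = a.+1 by rewrite size_take size_Lx hn.
case: (boolP (uniq (take a.+1 (Lx x)))) => hu.
  have [c [hc [y hy hcy]]] : exists c : R -> int, \sum_(y <- take a.+1 (Lx x)) (c y)%:~R * y = 0 /\
      exists2 y, y \in take a.+1 (Lx x) & c y != 0.
    case: (pselect (exists c : R -> int, \sum_(y <- take a.+1 (Lx x)) (c y)%:~R * y = 0 /\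
      exists2 y, y \in take a.+1 (Lx x) & c y != 0)) => // hno; exfalso; apply: hNi; split => //.
    move=> c hc y hy; case: (eqVneq (c y) 0%Z) => // hcy; exfalso; apply: hno; exists c; split => //.
    by exists y.
  exists [ffun i : 'I_(a + b) => if (i <= a)%N then c (x ord0 i) else 0%Z].
  split.
    have [i hi hyi] := nthP 0 hy.
    move: hcy; rewrite -hyi => hcy.
    have hia : (i <= a)%N by move: hi; rewrite hsz ltnS.
    have hi' : (i < a + b)%N by apply: leq_ltn_trans hia (ltnW hn).
    exists (Ordinal hi'); rewrite ffunE /= hia.
    by rewrite nth_take ?ltnS // (nth_Lx_nat hi') in hcy.
  rewrite -[RHS]hc -(sum_DsetF x (fun y => (c y)%:~R * y) hn) big_mkcond /=.
  rewrite [RHS]big_mkcond; apply: eq_bigr => i _; rewrite ffunE.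
  by case: ifP => _ //; rewrite mul0r.
move: hu => /(uniqPn 0) [i [j [hij hj hE]]].
have hj' : (j < a + b)%N by move: hj; rewrite hsz => hj0; lia.
have hi' : (i < a + b)%N by lia.
exists [ffun k : 'I_(a + b) => ((k : nat) == i)%:Z - ((k : nat) == j)%:Z].
split.
  exists (Ordinal hi'); rewrite ffunE /= eqxx.
  by have -> : (i == j) = false by apply/negbTE; rewrite neq_ltn hij.
have -> : \sum_(k < a + b) ([ffun k : 'I_(a + b) => ((k : nat) == i)%:Z - ((k : nat) == j)%:Z] k)%:~R * x ord0 k
   = \sum_(k < a + b) ((if (k : nat) == i then x ord0 k else 0) - (if (k : nat) == j then x ord0 k else 0)).
  apply: eq_bigr => k _; rewrite ffunE intrB mulrBl.
  by congr (_ - _); case: eqP => _; rewrite ?mul1r ?mul0r.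
rewrite sumrB (sum_if_nat (fun k => x ord0 k) i hi') (sum_if_nat (fun k => x ord0 k) j hj').
rewrite -(nth_Lx_nat hi') -(nth_Lx_nat hj').
have hja : (j < a.+1)%N by move: hj; rewrite hsz.
have hia : (i < a.+1)%N by lia.
by rewrite nth_take // nth_take // in hE; rewrite hE subrr.
Qed.

Theorem lemma4p7 (R : realType) (a b : nat) (ha : (1 <= a)%N) (hb : (2 <= b)%N) :
  lebesgue_null
    [set x : 'rV[R]_(a + b) | @Dset R a b x /\
       ~ (exists y : 'rV[R]_(a + b),
            ((fun k : nat => iter k (@Tab R a b) x) @ \oo --> y) /\
            (forall i : 'I_(a + b), (i <= a)%N -> y ord0 i = 0) /\
            (forall i : 'I_(a + b), (a < i)%N -> 0 < y ord0 i))].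
Proof.
have hn : (0 < a + b)%N by rewrite addn_gt0 ha.
apply: (lnull_sub _ _ (exc_sub ha hb)).
exact: (Bad_null (Ordinal hn)).
Qed.
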